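(* Let $\alpha\ge1$ and consider the WBDF3 coefficients $(a_0,a_1,a_2)=(\tfrac32\alpha+\tfrac13,\ \tfrac56-2\alpha,\ \tfrac12\alpha-\tfrac16)$, $(b_0,\dots,b_3)=(\alpha,1-\alpha,0,0)$, $(c_0,c_1,c_2)=(2\alpha+1,-3\alpha,\alpha)$. Then $$\sigma_{\mathrm{F}}=1,\quad\sigma_{\mathrm{E}}=\frac{3(6\alpha+1)}{2(6\alpha-1)},\quad\lambda_{\mathrm{I}}=\frac{3(2\alpha-1)}{2(6\alpha-1)},\quad\text{so that}\quad\mathfrak{I}_{\mathrm{IE}}=\frac{2\alpha-1}{6\alpha+1}.$$
   Context: For coefficient vectors $(a_j)_{j=0}^{\mathrm{k}-1}$, $(b_j)_{j=0}^{\mathrm{k}}$, $(c_j)_{j=0}^{\mathrm{k}-1}$ define $a(\theta)=\sum_j a_je^{\imath j\theta}$, $b(\theta)=\sum_j b_je^{\imath j\theta}$, $c(\theta)=\sum_jc_je^{\imath j\theta}$ and $\sigma_{\mathrm{F}}=\max_{\theta\in[0,2\pi)}|1/a(\theta)|$, $\sigma_{\mathrm{E}}=\max_{\theta\in[0,2\pi)}|c(\theta)/a(\theta)|$, $\lambda_{\mathrm{I}}=\min_{\theta\in[0,2\pi)}\Re[b(\theta)/a(\theta)]$, $\mathfrak{I}_{\mathrm{IE}}=\lambda_{\mathrm{I}}/\sigma_{\mathrm{E}}$. Here $\mathrm{k}=3$. *)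

(* Defs.v *)
From HB Require Import structures.
From mathcomp Require Import all_boot all_order all_algebra.
From mathcomp Require Import all_classical all_reals all_analysis.
From mathcomp Require Import complex.
Set Implicit Arguments. Unset Strict Implicit. Unset Printing Implicit Defensive.
Import Order.TTheory GRing.Theory Num.Theory.
Local Open Scope ring_scope.
Local Open Scope complex_scope.

Definition cexpi (R : realType) (t : R) : R[i] := cos t +i* sin t.

Definition trigpoly (R : realType) (s : seq R) (t : R) : R[i] :=
  \sum_(j < size s) (s`_j)%:C * cexpi (j%:R * t).

Definition is_max_on (R : realType) (f : R -> R) (v : R) : Prop :=
  (exists2 t, (0 <= t /\ t < 2 * pi) & f t = v) /\
  (forall t, 0 <= t -> t < 2 * pi -> f t <= v).

Definition is_min_on (R : realType) (f : R -> R) (v : R) : Prop :=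
  (exists2 t, (0 <= t /\ t < 2 * pi) & f t = v) /\
  (forall t, 0 <= t -> t < 2 * pi -> v <= f t).

Definition is_sigmaF (R : realType) (a : seq R) (v : R) : Prop :=
  is_max_on (fun t => Normc.normc ((trigpoly a t)^-1)) v.

Definition is_sigmaE (R : realType) (a c : seq R) (v : R) : Prop :=
  is_max_on (fun t => Normc.normc (trigpoly c t / trigpoly a t)) v.

Definition is_lambdaI (R : realType) (a b : seq R) (v : R) : Prop :=
  is_min_on (fun t => complex.Re (trigpoly b t / trigpoly a t)) v.

Definition wbdf3_a (R : realType) (al : R) : seq R :=
  [:: 3/2 * al + 1/3; 5/6 - 2 * al; 1/2 * al - 1/6].
Definition wbdf3_b (R : realType) (al : R) : seq R :=
  [:: al; 1 - al; 0; 0].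
Definition wbdf3_c (R : realType) (al : R) : seq R :=
  [:: 2 * al + 1; - (3 * al); al].

(* Main.v *)
Require Import Defs.
From HB Require Import structures.
From mathcomp Require Import all_boot all_order all_algebra.
From mathcomp Require Import all_classical all_reals all_analysis.
From mathcomp Require Import complex.
From mathcomp Require Import ring lra.
Import Order.TTheory GRing.Theory Num.Theory.
Local Open Scope ring_scope.

Lemma w3m1 (R : realFieldType) (a : R) : 1 <= a -> 0 <= 2*a^+2-2*a+1/6.
Proof. move=> ha. nra. Qed.
Lemma w3m2 (R : realFieldType) (a : R) : 1 <= a -> 0 <= 8*a^+2-8/3*a-5/18.
Proof. move=> ha. nra. Qed.
Lemma w3m3 (R : realFieldType) (a c : R) : 1 <= a -> -1 <= c -> c <= 1 -> 0 <= 2*a^+2-2*a+1/6 -> 0 <= 8*a^+2-8/3*a-5/18 -> 0 <= -(3*a^+2-a/3-2/9)*c + 5*a^+2-7*a/3-1/18.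
Proof. move=> ha h1 h2 h3 h4. nra. Qed.
Lemma w3t1 (R : realFieldType) (a : R) : 1 <= a -> 0 <= 10*a^+2 + 26/3*a + 5/18.
Proof. move=> ha. nra. Qed.
Lemma w3t2 (R : realFieldType) (a : R) : 1 <= a -> 0 <= 40*a^+4 - 16/3*a^+3 - 68/9*a^+2 + 164/9*a + 13/18.
Proof. move=> ha. nra. Qed.
Lemma w3t3 (R : realFieldType) (a c : R) : 1 <= a -> -1 <= c -> c <= 1 -> 0 <= 10*a^+2 + 26/3*a + 5/18 -> 0 <= 40*a^+4 - 16/3*a^+3 - 68/9*a^+2 + 164/9*a + 13/18 -> 0 <= (-20*a^+4+8/3*a^+3+79/9*a^+2-43/9*a-2/9)*c + (20*a^+4 - 8/3*a^+3 + 11/9*a^+2 + 121/9*a + 1/2).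
Proof. move=> ha h1 h2 h3 h4. nra. Qed.
Lemma w3t4 (R : realFieldType) (a : R) : 1 <= a -> 0 <= 12*a^+3-10*a^+2+a+11/6.
Proof. move=> ha. nra. Qed.
Lemma w3t5 (R : realFieldType) (a c : R) : 1 <= a -> -1 <= c -> c <= 1 -> 0 <= 3*a+1/2 -> 0 <= 12*a^+3-10*a^+2+a+11/6 -> 0 <= (-6*a^+3+5*a^+2+a-2/3)*c + (3*a+1/2) - (-6*a^+3+5*a^+2+a-2/3).
Proof. move=> ha h1 h2 h3 h4. nra. Qed.

Lemma w3hcp (R : realFieldType) (c : R) : -1 <= c -> 0 <= 1 + c.
Proof. move=> h; lra. Qed.
Lemma w3hcm (R : realFieldType) (c : R) : c <= 1 -> 0 <= 1 - c.
Proof. move=> h; lra. Qed.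
Lemma w3hh1 (R : realFieldType) (a : R) : 1 <= a -> 0 <= 3*a+1/2.
Proof. move=> h; lra. Qed.
Section P.
Variable R : realFieldType.
Variables (a c s : R).
Hypothesis ha : 1 <= a.
Hypothesis hc1 : -1 <= c.
Hypothesis hc2 : c <= 1.
Hypothesis hs : s ^+ 2 = 1 - c ^+ 2.

Definition w3Ar := (3/2*a+1/3) + (5/6-2*a)*c + (1/2*a-1/6)*(2*c^+2-1).
Definition w3Ai := (5/6-2*a) + (1/2*a-1/6)*(2*c).
Definition w3Cr := (2*a+1) + (-(3*a))*c + a*(2*c^+2-1).
Definition w3Ci := (-(3*a)) + a*(2*c).
Definition w3Ap := 17/18 + 5/18*c - 2/9*c^+2 + a*(-7/3 + 8/3*c - 1/3*c^+2) + a^+2*(5 - 8*c + 3*c^+2).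
Definition w3Cp := 1 + 2*a - 6*a*c + 4*a*c^+2 + 10*a^+2 - 18*a^+2*c + 8*a^+2*c^+2.
Definition w3Xp := 5/6 + 1/6*c + a*(-7/3 + 8/3*c - 1/3*c^+2) + a^+2*(3 - 4*c + c^+2).

Lemma w3eqA : w3Ar ^+ 2 + (s * w3Ai) ^+ 2 = w3Ap.
Proof. rewrite exprMn hs /w3Ar /w3Ai /w3Ap; by field. Qed.
Lemma w3eqC : w3Cr ^+ 2 + (s * w3Ci) ^+ 2 = w3Cp.
Proof. rewrite exprMn hs /w3Cr /w3Ci /w3Cp; by field. Qed.
Lemma w3eqX : (a + (1 - a) * c) * w3Ar + ((1 - a) * s) * (s * w3Ai) = w3Xp.
Proof. rewrite mulrA -(mulrA _ s s) -expr2 hs /w3Ar /w3Ai /w3Xp; by field. Qed.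

Lemma w3geA : 1 <= w3Ap.
Proof.
clear hs.
have hM := w3m3 _ _ _ ha hc1 hc2 (w3m1 _ _ ha) (w3m2 _ _ ha).
have h1 := w3hcm _ _ hc2.
have -> : w3Ap = 1 + (1 - c) * (-(3*a^+2-a/3-2/9)*c + 5*a^+2-7*a/3-1/18) by rewrite /w3Ap; field.
by rewrite lerDl; apply: mulr_ge0.
Qed.

Lemma w3geE : (2*(6*a-1))^+2 * w3Cp <= (3*(6*a+1))^+2 * w3Ap.
Proof.
clear hs.
have hG := w3t3 _ _ _ ha hc1 hc2 (w3t1 _ _ ha) (w3t2 _ _ ha).
have h1 := w3hcp _ _ hc1.
rewrite -subr_ge0.
have -> : (3*(6*a+1))^+2 * w3Ap - (2*(6*a-1))^+2 * w3Cp = 9 * ((1 + c) * ((-20*a^+4+8/3*a^+3+79/9*a^+2-43/9*a-2/9)*c + (20*a^+4 - 8/3*a^+3 + 11/9*a^+2 + 121/9*a + 1/2))) by rewrite /w3Ap /w3Cp; field.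
by apply: mulr_ge0 => //; apply: mulr_ge0.
Qed.

Lemma w3geL : 3*(2*a-1) * w3Ap <= 2*(6*a-1) * w3Xp.
Proof.
clear hs.
have hH1 := w3hh1 _ _ ha.
have hH := w3t5 _ _ _ ha hc1 hc2 hH1 (w3t4 _ _ ha).
have h1 := w3hcp _ _ hc1.
rewrite -subr_ge0.
have -> : 2*(6*a-1) * w3Xp - 3*(2*a-1) * w3Ap = (1 + c) * ((-6*a^+3+5*a^+2+a-2/3)*c + (3*a+1/2) - (-6*a^+3+5*a^+2+a-2/3)) by rewrite /w3Ap /w3Xp; field.
by apply: mulr_ge0.
Qed.
End P.
Arguments w3Ar {R}. Arguments w3Ai {R}. Arguments w3Cr {R}. Arguments w3Ci {R}. Arguments w3Ap {R}. Arguments w3Cp {R}. Arguments w3Xp {R}.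


Section Aux.
Local Open Scope complex_scope.

Lemma my_normcE (R : rcfType) (x y : R) : Normc.normc (x +i* y) = Num.sqrt (x ^+ 2 + y ^+ 2).
Proof. by []. Qed.

Lemma my_invcE (R : rcfType) (x y : R) :
  (x +i* y)^-1 = (x / (x ^+ 2 + y ^+ 2)) +i* (- (y / (x ^+ 2 + y ^+ 2))).
Proof. by []. Qed.

Lemma w3Re_div (R : rcfType) (u v x y : R) :
  complex.Re ((u +i* v) / (x +i* y)) = (u * x + v * y) / (x ^+ 2 + y ^+ 2).
Proof.
rewrite my_invcE; simpc => /=.
move: (x ^+ 2 + y ^+ 2) => n.
by rewrite mulrDl !mulrA.
Qed.

Lemma w3frac_le (R : realFieldType) (P Q A X : R) :
  0 < Q -> 0 < A -> P * A <= Q * X -> P / Q <= X / A.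
Proof.
move=> hQ hA h; rewrite ler_pdivlMr // mulrAC ler_pdivrMr //.
by rewrite (mulrC X Q).
Qed.

Lemma w3sqrt_frac_le (R : rcfType) (N D A C : R) :
  0 < N -> 0 < D -> 0 < A -> 0 <= C -> D ^+ 2 * C <= N ^+ 2 * A ->
  Num.sqrt C / Num.sqrt A <= N / D.
Proof.
move=> hN hD hA hC h.
have hsA : 0 < Num.sqrt A by rewrite sqrtr_gt0.
rewrite ler_pdivrMr // mulrAC ler_pdivlMr //.
have -> : Num.sqrt C * D = Num.sqrt (D ^+ 2 * C).
  by rewrite sqrtrM ?sqr_ge0 // sqrtr_sqr ger0_norm ?(ltW hD) // mulrC.
have -> : N * Num.sqrt A = Num.sqrt (N ^+ 2 * A).
  by rewrite sqrtrM ?sqr_ge0 // sqrtr_sqr ger0_norm ?(ltW hN).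
by rewrite ler_sqrt // mulr_ge0 ?sqr_ge0 // ltW.
Qed.

Lemma w3cmulRC (R : rcfType) (a x y : R) : a%:C * (x +i* y) = (a * x) +i* (a * y).
Proof. by simpc. Qed.
Lemma w3caddC (R : rcfType) (a b x y : R) : (a +i* b) + (x +i* y) = (a + x) +i* (b + y).
Proof. by simpc. Qed.

Lemma w3trig3 (R : realType) (p0 p1 p2 t : R) :
  trigpoly [:: p0; p1; p2] t =
  (p0 + p1 * cos t + p2 * (2 * cos t ^+ 2 - 1)) +i*
  (p1 * sin t + p2 * (2 * cos t * sin t)).
Proof.
rewrite /trigpoly /= !big_ord_recl big_ord0 /= /cexpi.
have -> : (bump 0 (bump 0 0))%:R * t = t *+ 2 by rewrite mulr_natl.
rewrite cos_mulr2n sin_mulr2n.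
have -> : (bump 0 0)%:R * t = t by rewrite mulr_natl mulr1n.
rewrite (_ : (0%N)%:R * t = 0); last by rewrite mulr_natl mulr0n.
rewrite cos0 sin0 !w3cmulRC addr0 !w3caddC.
congr Complex; move: (cos t) (sin t) => c s; ring.
Qed.

Lemma w3trig4 (R : realType) (p0 p1 t : R) :
  trigpoly [:: p0; p1; 0; 0] t = (p0 + p1 * cos t) +i* (p1 * sin t).
Proof.
rewrite /trigpoly /= !big_ord_recl big_ord0 /= /cexpi.
have -> : (bump 0 0)%:R * t = t by rewrite mulr_natl mulr1n.
rewrite (_ : (0%N)%:R * t = 0); last by rewrite mulr_natl mulr0n.
rewrite cos0 sin0 !w3cmulRC addr0 !w3caddC.
congr Complex; move: (cos t) (sin t) => c s; ring.
Qed.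

Lemma w3trigA (R : realType) (al t : R) :
  trigpoly (wbdf3_a al) t = w3Ar al (cos t) +i* (sin t * w3Ai al (cos t)).
Proof.
rewrite /wbdf3_a w3trig3 /w3Ar /w3Ai; congr Complex.
move: (cos t) (sin t) => c s; ring.
Qed.

Lemma w3trigC (R : realType) (al t : R) :
  trigpoly (wbdf3_c al) t = w3Cr al (cos t) +i* (sin t * w3Ci al (cos t)).
Proof.
rewrite /wbdf3_c w3trig3 /w3Cr /w3Ci; congr Complex.
move: (cos t) (sin t) => c s; ring.
Qed.

Lemma w3trigB (R : realType) (al t : R) :
  trigpoly (wbdf3_b al) t = (al + (1 - al) * cos t) +i* ((1 - al) * sin t).
Proof. by rewrite /wbdf3_b w3trig4. Qed.
End Aux.

Lemma w3two_pi_gt (R : realType) : (0 : R) < 2 * pi.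
Proof. have := @pi_gt0 R; lra. Qed.
Lemma w3pi_lt2 (R : realType) : (pi : R) < 2 * pi.
Proof. have := @pi_gt0 R; lra. Qed.
Lemma w3sc2 (R : realType) (t : R) : sin t ^+ 2 = 1 - cos t ^+ 2.
Proof. by rewrite sin2cos2. Qed.

Theorem mainTheorem4 (R : realType) (al : R) (hal : 1 <= al) :
  let sigmaE := 3 * (6 * al + 1) / (2 * (6 * al - 1)) in
  let lambdaI := 3 * (2 * al - 1) / (2 * (6 * al - 1)) in
  [/\ is_sigmaF (wbdf3_a al) 1,
      is_sigmaE (wbdf3_a al) (wbdf3_c al) sigmaE,
      is_lambdaI (wbdf3_a al) (wbdf3_b al) lambdaI
    & lambdaI / sigmaE = (2 * al - 1) / (6 * al + 1)].
Proof.
move=> sE lI.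
have hApos : forall t : R, 0 < w3Ap al (cos t).
  by move=> t; apply: (lt_le_trans ltr01); apply: w3geA; [exact: hal | exact: cos_geN1 | exact: cos_le1].
have nA : forall t : R, Normc.normc (trigpoly (wbdf3_a al) t) = Num.sqrt (w3Ap al (cos t)).
  by move=> t; rewrite w3trigA my_normcE (w3eqA _ _ _ _ (w3sc2 _ t)).
have nC : forall t : R, Normc.normc (trigpoly (wbdf3_c al) t) = Num.sqrt (w3Cp al (cos t)).
  by move=> t; rewrite w3trigC my_normcE (w3eqC _ _ _ _ (w3sc2 _ t)).
have hCge : forall t : R, 0 <= w3Cp al (cos t).
  by move=> t; rewrite -(w3eqC _ _ _ _ (w3sc2 _ t)) addr_ge0 // sqr_ge0.
have h61 : 0 < 6 * al - 1 by lra.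
have h61' : 0 < 6 * al + 1 by lra.
have h21 : 0 < 2 * al - 1 by lra.
have hD : 0 < 4 * al - 2/3 by lra.
have h3 : 0 < 4 * al * 3 - 2 by lra.
have ApPi : w3Ap al (cos pi) = (4 * al - 2/3) ^+ 2 by rewrite cospi /w3Ap; field.
have CpPi : w3Cp al (cos pi) = (6 * al + 1) ^+ 2 by rewrite cospi /w3Cp; field.
have XpPi : w3Xp al (cos pi) = (2 * al - 1) * (4 * al - 2/3) by rewrite cospi /w3Xp; field.
split.
- split.
    exists 0; first by split; [exact: lexx | exact: w3two_pi_gt].
    rewrite /= Normc.normcV nA cos0 (_ : w3Ap al 1 = 1) ?sqrtr1 ?invr1 //.
    by rewrite /w3Ap; field.
  move=> t _ _ /=; rewrite Normc.normcV nA invf_le1 ?sqrtr_gt0 //.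
  rewrite -sqrtr1 ler_sqrt ?(ltW (hApos t)) //.
  by apply: w3geA; [exact: hal | exact: cos_geN1 | exact: cos_le1].
- split.
    exists pi; first by split; [exact: (ltW (@pi_gt0 R)) | exact: w3pi_lt2].
    rewrite /= Normc.normcM Normc.normcV nA nC ApPi CpPi !sqrtr_sqr !ger0_norm ?ltW //.
    rewrite /sE; field.
    by rewrite ?(gt_eqF h61) ?(gt_eqF h61') ?(gt_eqF h3).
  move=> t _ _ /=; rewrite Normc.normcM Normc.normcV nA nC /sE.
  apply: w3sqrt_frac_le => //; try by apply: mulr_gt0.
  by apply: w3geE; [exact: hal | exact: cos_geN1 | exact: cos_le1].
- split.
    exists pi; first by split; [exact: (ltW (@pi_gt0 R)) | exact: w3pi_lt2].
    rewrite /= w3trigA w3trigB w3Re_div (w3eqX _ _ _ _ (w3sc2 _ pi)) (w3eqA _ _ _ _ (w3sc2 _ pi)) ApPi XpPi.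
    rewrite /lI; field.
    by rewrite ?(gt_eqF h61) ?(gt_eqF h61') ?(gt_eqF h3).
  move=> t _ _ /=; rewrite w3trigA w3trigB w3Re_div (w3eqX _ _ _ _ (w3sc2 _ t)) (w3eqA _ _ _ _ (w3sc2 _ t)) /lI.
  apply: w3frac_le => //; first by apply: mulr_gt0.
  by apply: w3geL; [exact: hal | exact: cos_geN1 | exact: cos_le1].
- rewrite /lI /sE; field.
  by rewrite ?(gt_eqF h61) ?(gt_eqF h61') ?(gt_eqF h3).
Qed.
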